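(* Let $n\ge3$, $\mathcal{O}\subset\mathbb{R}^n$ bounded open with $C^2$ boundary, and suppose (H1) holds. Then for every $\tau<T$ the operator $A(t)$ is uniformly strongly elliptic on $[\tau,T]$: there exists $C>0$ (depending on $r,\tau,T$) such that $\sum_{j,k=1}^n a_{jk}(t,y)z_jz_k\ge C\|z\|^2_{\mathbb{R}^n}$ for all $(t,y)\in[\tau,T]\times\overline{\mathcal{O}}$ and $z\in\mathbb{R}^n$.
   Context: $r\in C^1(\mathbb{R}\times\overline{\mathcal{O}},\mathbb{R}^n)$ with $r(t,\cdot):\overline{\mathcal{O}}\to r(t,\overline{\mathcal{O}})$ a $C^2$ diffeomorphism for each $t$, inverse $r^{-1}(t,\cdot)=(r^{-1}_1,\dots,r^{-1}_n)$; $a_{jk}(t,y)=\sum_{i=1}^n \frac{\partial r^{-1}_j}{\partial x_i}(t,r(t,y))\frac{\partial r^{-1}_k}{\partial x_i}(t,r(t,y))$; $A(t)v=-\sum_{j,k}\partial_{y_j}(a_{jk}(t,\cdot)\partial_{y_k}v)+\beta v$, $\beta>0$. (H1): $r^{-1}(\cdot,x)$ is $C^1$ in $t$, and there are $h\in C(\mathbb{R})$, $p_{ik}\in C^1(\mathbb{R}^n,\mathbb{R})$ with $\frac{\partial r^{-1}_k}{\partial x_i}(t,r(t,y))=h(t)p_{ik}(y)$ for all $t,y,i,k$; $h$ is Hölder continuous with exponent $\theta\in(0,1]$ and $0<h_0\le h\le h_1$. *)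

(* Defs.v *)
From HB Require Import structures.
From mathcomp Require Import all_boot all_order all_algebra.
From mathcomp Require Import all_classical all_reals all_analysis.
Set Implicit Arguments. Unset Strict Implicit. Unset Printing Implicit Defensive.
Import Order.TTheory GRing.Theory Num.Theory.
Import numFieldNormedType.Exports.
Local Open Scope classical_set_scope.
Local Open Scope ring_scope.

Section Defs.
Variable R : realType.
Variable n : nat.

Definition vcoord (y : 'rV[R]_n) (i : 'I_n) : R := y ord0 i.

Definition evec (i : 'I_n) : 'rV[R]_n := \row_(j < n) (i == j)%:R.

Definition partial (W : normedModType R) (f : 'rV[R]_n -> W) (i : 'I_n)
  (x : 'rV[R]_n) : W := derive f x (evec i).

Fixpoint Ck (W : normedModType R) (k : nat) (U : set 'rV[R]_n)
  (f : 'rV[R]_n -> W) : Prop :=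
  match k with
  | 0 => forall x, U x -> {for x, continuous f}
  | k'.+1 => (forall x, U x -> {for x, continuous f}) /\
      forall i : 'I_n, (forall x, U x -> derivable f x (evec i)) /\
                       Ck k' U (partial f i)
  end.

Definition Ck_on (W : normedModType R) (k : nat) (S : set 'rV[R]_n)
  (f : 'rV[R]_n -> W) : Prop :=
  exists U : set 'rV[R]_n, open U /\ S `<=` U /\ Ck k U f.

(* O has a C^2 boundary: near each boundary point, O is (after choosing a
   coordinate direction i and an orientation s = +-1) the subgraph
   { x | s * x_i < s * g(x) } of a C^2 function g not depending on x_i. *)
Definition C2_boundary (O : set 'rV[R]_n) : Prop :=
  forall x0, (closure O `\` O) x0 ->
    exists (e : R) (i : 'I_n) (s : R) (g : 'rV[R]_n -> R),
      [/\ 0 < e, s = 1 \/ s = -1,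
          (forall x c, g (x + c *: evec i) = g x),
          Ck 2 setT g &
          (forall x, ball x0 e x -> (O x <-> s * vcoord x i < s * g x))].

Definition C1_joint (S : set 'rV[R]_n) (r : R -> 'rV[R]_n -> 'rV[R]_n) : Prop :=
  exists U : set 'rV[R]_n, [/\ open U, S `<=` U &
    forall t y, U y ->
      [/\ {for (t, y), continuous (fun p : R * 'rV[R]_n => r p.1 p.2)},
          derivable (fun s => r s y) t 1,
          {for (t, y), continuous
              (fun p : R * 'rV[R]_n => derive (fun s => r s p.2) p.1 1)} &
          forall i : 'I_n, derivable (r t) y (evec i) /\
            {for (t, y), continuous
              (fun p : R * 'rV[R]_n => partial (r p.1) i p.2)}]].

Definition acoef (r rinv : R -> 'rV[R]_n -> 'rV[R]_n) (j k : 'I_n)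
  (t : R) (y : 'rV[R]_n) : R :=
  \sum_(i < n) partial (fun x => vcoord (rinv t x) j) i (r t y) *
               partial (fun x => vcoord (rinv t x) k) i (r t y).

End Defs.

(* Main.v *)
Require Import Defs.
From HB Require Import structures.
From mathcomp Require Import all_boot all_order all_algebra.
From mathcomp Require Import all_classical all_reals all_analysis.
From mathcomp Require Import ring lra.
Import Order.TTheory GRing.Theory Num.Theory.
Import numFieldNormedType.Exports.
Local Open Scope classical_set_scope.
Local Open Scope ring_scope.

Section Core.
Variable R : realType.
Variable n : nat.

Lemma coord_le_norm (v : 'rV[R]_n) i : `|v ord0 i| <= `|v|.
Proof.
rewrite [leRHS]/Num.Def.normr /= mx_normrE.
by apply/bigmax_geP; right; exists (ord0, i).
Qed.

Lemma norm_lt_coord (v : 'rV[R]_n) d : 0 < d -> (forall i, `|v ord0 i| < d) -> `|v| < d.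
Proof.
move=> d0 H; rewrite [ltLHS]/Num.Def.normr /= mx_normrE.
apply: bigmax_lt => //= -[a b] _ /=.
by rewrite (ord1 a); apply: H.
Qed.

Lemma ballE (x y : 'rV[R]_n) d : ball x d y = (`|x - y| < d).
Proof. by rewrite -ball_normE. Qed.

Lemma line_derive (f : 'rV[R]_n -> R) q v s l :
  is_derive (q + s *: v) v f l -> is_derive s 1 (fun t => f (q + t *: v)) l.
Proof.
move=> [d1 d2].
have E : (fun h : R => h^-1 *: (((fun t => f (q + t *: v)) \o shift s) (h *: 1)
             - f (q + s *: v)))
     = (fun h => h^-1 *: ((f \o shift (q + s *: v)) (h *: v) - f (q + s *: v))).
  apply: funext => h /=; congr (_ *: (f _ - _)).
  by rewrite [h *: 1]mulr1 scalerDl addrCA addrC.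
split.
  by rewrite /derivable E.
by rewrite /derive E.
Qed.


Definition qpt (x x0 : 'rV[R]_n) (j : nat) : 'rV[R]_n :=
  \row_m (if (m < j)%N then x ord0 m else x0 ord0 m).

Lemma qptS (x x0 : 'rV[R]_n) (j : 'I_n) :
  qpt x x0 j.+1 = qpt x x0 j + (x ord0 j - x0 ord0 j) *: evec R j.
Proof.
apply/rowP => m; rewrite !mxE ltnS leq_eqVlt.
case: (eqVneq m j) => [->|mj] /=.
  by rewrite ltnn eqxx mulr1 addrC subrK.
have -> : (nat_of_ord m == nat_of_ord j) = false by apply/negbTE.
by rewrite /= mulr0 addr0.
Qed.

Lemma core (f : 'rV[R]_n -> R) (df : 'I_n -> 'rV[R]_n -> R) (x0 : 'rV[R]_n) (d G : R) :
  (forall x, ball x0 d x -> forall m, is_derive x (evec R m) f (df m x)) ->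
  (forall x, ball x0 d x -> forall m, `|df m x| <= G) ->
  forall x, ball x0 d x -> `|f x - f x0| <= G * \sum_m `|x ord0 m - x0 ord0 m|.
Proof.
move=> Hd HG x bx.
have d0 : 0 < d by move: bx; rewrite ballE; apply: le_lt_trans; apply: normr_ge0.
have cx m : `|x0 ord0 m - x ord0 m| < d.
  have := coord_le_norm (x0 - x) m; rewrite !mxE => H.
  by apply: le_lt_trans H _; rewrite -ballE.
have inb (j : 'I_n) (s : R) : `|s| <= `|x ord0 j - x0 ord0 j| ->
    ball x0 d (qpt x x0 j + s *: evec R j).
  move=> hs; rewrite ballE; apply: norm_lt_coord => // m.
  rewrite !mxE.
  case: (eqVneq j m) => [<-|jm] /=.
    rewrite ltnn mulr1 opprD addrA subrr sub0r normrN.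
    by apply: le_lt_trans hs _; rewrite distrC.
  rewrite mulr0 addr0; case: ifP => _ //.
  by rewrite subrr normr0.
have step (j : 'I_n) : `|f (qpt x x0 j.+1) - f (qpt x x0 j)| <= G * `|x ord0 j - x0 ord0 j|.
  rewrite qptS.
  set dj := x ord0 j - x0 ord0 j.
  set phi := fun t => f (qpt x x0 j + t *: evec R j).
  have Dphi (s : R) : `|s| <= `|dj| -> is_derive s (1 : R) phi (df j (qpt x x0 j + s *: evec R j)).
    by move=> hs; apply: line_derive; apply: Hd; apply: inb.
  have Gphi (s : R) : `|s| <= `|dj| -> `|df j (qpt x x0 j + s *: evec R j)| <= G.
    by move=> hs; apply: HG; apply: inb.
  have E0 : f (qpt x x0 j) = phi 0 by rewrite /phi scale0r addr0.
  rewrite E0 -/(phi dj).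
  have [dj0|dj0] := leP 0 dj.
    have inI c : c \in `[0, dj] -> `|c| <= `|dj|.
      rewrite in_itv /= => /andP[c0 cd].
      by rewrite !ger0_norm // (le_trans c0 cd).
    have [c cI ->] := MVT_segment dj0 (fun c cI => Dphi c (inI c (subset_itv_oo_cc cI)))
      (derivable_within_continuous (fun c cI => @ex_derive _ _ _ _ _ _ _ (Dphi c (inI c cI)))).
    by rewrite subr0 normrM ler_wpM2r // Gphi // inI.
  have inI c : c \in `[dj, 0] -> `|c| <= `|dj|.
    rewrite in_itv /= => /andP[c0 cd].
    by rewrite !ler0_norm ?lerN2 // ltW.
  have [c cI E] := MVT_segment (ltW dj0) (fun c cI => Dphi c (inI c (subset_itv_oo_cc cI)))
      (derivable_within_continuous (fun c cI => @ex_derive _ _ _ _ _ _ _ (Dphi c (inI c cI)))).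
  by rewrite distrC E sub0r normrM normrN ler_wpM2r // Gphi // inI.
have -> : f x - f x0 = \sum_(0 <= k < n) (f (qpt x x0 k.+1) - f (qpt x x0 k)).
  rewrite telescope_sumr //; congr (f _ - f _); apply/rowP => m; rewrite !mxE //.
  by rewrite ltn_ord.
rewrite big_mkord mulr_sumr.
apply: le_trans (ler_norm_sum _ _ _) _.
by apply: ler_sum => j _; apply: step.
Qed.

Lemma closure_bounded (O : set 'rV[R]_n) : bounded_set O -> bounded_set (closure O).
Proof.
move=> bO.
have bO' : \forall M \near +oo, globally O [set x : 'rV[R]_n | `|x| <= M] := bO.
suff : \forall M \near +oo, globally (closure O) [set x : 'rV[R]_n | `|x| <= M] by [].
near=> M.
have : globally O [set x : 'rV[R]_n | `|x| <= M] by near: M; exact: bO'.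
move=> HM x Cx.
have cl : closed [set x : 'rV[R]_n | `|x| <= M].
  exact: (continuous_closedP _).1 norm_continuous _ (@closed_le _ M).
have : closure O `<=` [set x | `|x| <= M].
  by rewrite [X in _ `<=` X](closure_id _).1 //; apply: closureS.
by apply.
Unshelve. all: by end_near. Qed.

Lemma bound_on_closure (O U : set 'rV[R]_n) (W : normedModType R) (g : 'rV[R]_n -> W) :
  bounded_set O -> closure O `<=` U -> (forall y, U y -> {for y, continuous g}) ->
  exists K, 0 < K /\ forall y, closure O y -> `|g y| <= K.
Proof.
move=> bO CU cg.
have cpt : compact (closure O).
  by apply: bounded_closed_compact; [exact: closure_bounded | exact: closed_closure].
have cpt2 : compact (g @` closure O).
  apply: continuous_compact cpt.
  by apply: continuous_in_subspaceT => y /set_mem /CU /cg.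
have [M [Mr HM]] := compact_bounded cpt2.
exists (Num.max M 0 + 1); split.
  have H1 : 0 <= Num.max M 0 by rewrite le_max lexx orbT.
  by apply: (le_lt_trans H1); rewrite ltrDl.
move=> y Cy; apply: (HM (Num.max M 0 + 1)).
  have H1 : M <= Num.max M 0 by rewrite le_max lexx.
  by apply: (le_lt_trans H1); rewrite ltrDl.
by exists y.
Qed.

Lemma sumsq_le (m : nat) (a : 'I_m -> R) :
  (\sum_i a i) ^+ 2 <= m%:R * \sum_i a i ^+ 2.
Proof.
elim: m a => [|m IH] a; first by rewrite !big_ord0 expr0n /= mul0r.
rewrite !big_ord_recr /=.
set S := \sum_(i < m) a (widen_ord (leqnSn m) i).
set Q := \sum_(i < m) a (widen_ord (leqnSn m) i) ^+ 2.
set b := a ord_max.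
have HS : S ^+ 2 <= m%:R * Q by apply: IH.
have H2 : 2 * S * b <= Q + m%:R * b ^+ 2.
  have -> : m%:R * b ^+ 2 = \sum_(i < m) b ^+ 2 by rewrite sumr_const card_ord mulr_natl.
  rewrite /S /Q mulr_sumr mulr_suml.
  rewrite -big_split /=; apply: ler_sum => i _.
  set c := a _.
  have : 0 <= (c - b) ^+ 2 by apply: sqr_ge0.
  by rewrite sqrrB; lra.
rewrite -natr1; nra.
Qed.

Lemma cont_sum (T : topologicalType) (I : Type) (s : seq I) (f : I -> T -> R) x :
  (forall i, {for x, continuous (f i)}) ->
  {for x, continuous (fun y => \sum_(i <- s) f i y)}.
Proof.
move=> cf; elim: s => [|a s IH].
  have -> : (fun y : T => \sum_(i <- [::]) f i y) = cst 0.
    by apply: funext => y; rewrite big_nil.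
  exact: cst_continuous.
have -> : (fun y : T => \sum_(i <- a :: s) f i y) = f a + (fun y => \sum_(i <- s) f i y).
  by apply: funext => y; rewrite big_cons.
exact: continuousD.
Qed.

Lemma eps_lemma (a N G K : R) : 0 <= N -> 0 <= G -> 0 <= K ->
  (forall e, 0 < e -> e <= 1 -> a <= N * (G + e) * (K + e)) -> a <= N * G * K.
Proof.
move=> N0 G0 K0 H; apply/ler_addgt0Pr => e e0.
set c := N * (G + K + 1) + 1.
have c0 : 0 < c by rewrite /c; apply: ltr_wpDl => //; apply: mulr_ge0 => //; lra.
set e' := Num.min 1 (e / c).
have e'0 : 0 < e' by rewrite lt_min ltr01 divr_gt0.
have e'1 : e' <= 1 by rewrite ge_min lexx.
have e'c : e' * c <= e.
  have : e' <= e / c by rewrite ge_min lexx orbT.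
  by rewrite ler_pdivlMr.
apply: (le_trans (H e' e'0 e'1)).
have : N * (G + e') * (K + e') <= N * G * K + e' * (N * (G + K + 1)).
  have : N * (e' * e') <= N * e' by apply: ler_wpM2l => //; rewrite -[leRHS]mulr1; apply: ler_wpM2l => //; lra.
  nra.
rewrite /c in e'c; nra.
Qed.

Lemma evec_norm (l : 'I_n) : `|evec R l| <= 1.
Proof.
rewrite [leLHS]/Num.Def.normr /= mx_normrE.
apply: bigmax_le => // -[a b] _ /=; rewrite mxE.
by case: (_ == _); rewrite ?normr1 ?normr0.
Qed.


Lemma term_le_sum (f : 'I_n -> R) m : (forall i, 0 <= f i) -> f m <= \sum_i f i.
Proof. by move=> H; rewrite (bigD1 m) //= lerDl sumr_ge0. Qed.

Lemma key (O V : set 'rV[R]_n) (r0 ri : 'rV[R]_n -> 'rV[R]_n) (y w : 'rV[R]_n) (K : R) (l : 'I_n) :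
  open O -> O y ->
  (forall y', O y' -> ri (r0 y') = y') ->
  open V -> V (r0 y) ->
  (forall x m, V x -> derivable ri x (evec R m)) ->
  (forall m, {for r0 y, continuous (partial ri m)}) ->
  derivable r0 y (evec R l) ->
  `|partial r0 l y| <= K ->
  `|w ord0 l| <= n%:R * (\sum_m `|\sum_k w ord0 k * (partial ri m (r0 y)) ord0 k|) * K.
Proof.
move=> oO Oy Hinv oV Vx dri cri dr0 HK.
set x := r0 y.
set df := fun m x' => \sum_k w ord0 k * (partial ri m x') ord0 k.
set G0 := \sum_m `|df m x|.
have K0 : 0 <= K by apply: le_trans (normr_ge0 _) HK.
apply: eps_lemma => //; first by apply: sumr_ge0.
move=> e e0 e1.
set F := fun x' => \sum_k w ord0 k * ri x' ord0 k.
have dF x' m : V x' -> is_derive x' (evec R m) F (df m x').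
  move=> Vx'.
  have hk k : is_derive x' (evec R m) (w ord0 k \*: (fun z => ri z ord0 k))
      (w ord0 k *: (partial ri m x') ord0 k).
    apply: is_deriveZ; split.
      by move/derivable_mxP: (dri x' m Vx') => /(_ ord0 k).
    by rewrite /partial derive_mx ?mxE //; apply: dri.
  have := is_derive_sum hk.
  have -> : (\sum_(k < n) (w ord0 k \*: (fun z => ri z ord0 k))) = F.
    by rewrite fct_sumE; apply: funext => z.
  done.
set W := \sum_k `|w ord0 k| + 1.
have W0 : 0 < W by rewrite /W ltr_wpDl // sumr_ge0.
have nearm m : \forall t \near x, `|df m t - df m x| < e.
  have H := (@cvgrPdist_lt _ _ _ (nbhs x) _ (partial ri m) (partial ri m x)).1 (cri m) (e / W) (divr_gt0 e0 W0).
  near=> t.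
  have Ht : `|partial ri m x - partial ri m t| < e / W by near: t; exact: H.
  rewrite /df -sumrB.
  apply: le_lt_trans (ler_norm_sum _ _ _) _.
  apply: (@le_lt_trans _ _ (\sum_k `|w ord0 k| * (e / W))).
    apply: ler_sum => k _.
    rewrite -mulrBr normrM ler_wpM2l //.
    have := coord_le_norm (partial ri m x - partial ri m t) k; rewrite !mxE distrC.
    by move/le_trans; apply; apply: ltW.
  rewrite -mulr_suml.
  have hW : \sum_k `|w ord0 k| < W by rewrite /W ltrDl.
  have : (\sum_k `|w ord0 k|) * (e / W) < W * (e / W) by rewrite ltr_pM2r ?divr_gt0.
  by rewrite [X in _ < X]mulrCA divff ?mulr1 // lt0r_neq0.
have near1 : \forall x' \near x, V x' /\ forall m, `|df m x' - df m x| < e.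
  have nm := @filter_forall _ _ (fun m x' => `|df m x' - df m x| < e) (nbhs x) _ nearm.
  near=> x'; split; first by near: x'; exact: (oV x Vx).
  by near: x'; exact: nm.
case/nbhs_ballP: near1 => d d0 Hd.
have Hc := @core F df x d (G0 + e).
have Hc' : forall x', ball x d x' -> `|F x' - F x| <= (G0 + e) * \sum_m `|x' ord0 m - x ord0 m|.
  apply: Hc.
    by move=> x' bx' m; apply: dF; exact: (Hd _ bx').1.
  move=> x' bx' m; have [_ Hm] := Hd _ bx'.
  rewrite -[df m x'](subrK (df m x)).
  apply: le_trans (ler_normD _ _) _.
  rewrite addrC; apply: lerD.
    by apply: (term_le_sum (fun m => `|df m x|)).
  exact: ltW.
clear Hc.
have cvq : (fun s : R => s^-1 *: ((r0 \o shift y) (s *: evec R l) - r0 y)) @ 0^' --> partial r0 l y := dr0.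
set D := partial r0 l y.
have [rho rho0 Hrho] : exists2 rho : R, 0 < rho & ball y rho `<=` O.
  by apply/nbhs_ballP; exact: oO y Oy.
set Ke := K + e.
have Ke0 : 0 < Ke by rewrite /Ke ltr_wpDl.
near (0:R)^' => s.
have Hq : `|D - s^-1 *: (r0 (s *: evec R l + y) - r0 y)| < e.
  by near: s; exact: (cvgrPdist_lt _ _).1 cvq e e0.
have s1 : `|s| < d / Ke by near: s; apply: dnbhs0_lt; rewrite divr_gt0.
have s2 : `|s| < rho by near: s; apply: dnbhs0_lt.
have s0 : s != 0 by near: s; exact: nbhs_dnbhs_neq.
set ys := s *: evec R l + y.
have Oys : O ys.
  apply: Hrho; rewrite ballE /ys opprD addrCA subrr addr0 normrN normrZ.
  apply: le_lt_trans s2; rewrite -[leRHS]mulr1; apply: ler_wpM2l => //.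
  exact: evec_norm.
set c := r0 ys.
have qb : `|s^-1 *: (c - x)| <= Ke.
  rewrite -[s^-1 *: _](subrK D) -opprB.
  apply: le_trans (ler_normD _ _) _.
  by rewrite normrN addrC /Ke; apply: lerD => //; apply: ltW.
have cb : `|c - x| <= `|s| * Ke.
  have -> : c - x = s *: (s^-1 *: (c - x)) by rewrite scalerA divff // scale1r.
  by rewrite normrZ ler_wpM2l.
have bc : ball x d c.
  rewrite ballE distrC; apply: le_lt_trans cb _.
  by rewrite -ltr_pdivlMr.
have := Hc' c bc.
have -> : F c - F x = s * w ord0 l.
  rewrite /F /c /x !Hinv // -sumrB.
  rewrite (bigD1 l) //= big1.
    by rewrite /ys !mxE eqxx mulr1; lra.
  move=> k /negbTE kl; rewrite /ys !mxE eq_sym kl /=; lra.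
have sumb : \sum_m `|c ord0 m - x ord0 m| <= n%:R * (`|s| * Ke).
  have -> : n%:R * (`|s| * Ke) = \sum_(m < n) (`|s| * Ke) by rewrite sumr_const card_ord mulr_natl.
  apply: ler_sum => m _.
  apply: le_trans cb.
  by have := coord_le_norm (c - x) m; rewrite !mxE.
move=> H.
have G0e : 0 <= G0 + e by rewrite addr_ge0 ?sumr_ge0 // ltW.
have H1 : `|s| * `|w ord0 l| <= `|s| * (n%:R * (G0 + e) * Ke).
  rewrite -normrM; apply: le_trans H _.
  apply: le_trans (ler_wpM2l G0e sumb) _.
  by rewrite le_eqVlt; apply/orP; left; apply/eqP; ring.
by rewrite ler_pM2l ?normr_gt0 in H1.
Unshelve. all: by end_near. Qed.


End Core.

Theorem lemma3p3 (R : realType) (n : nat) (O : set 'rV[R]_n)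
  (r rinv : R -> 'rV[R]_n -> 'rV[R]_n)
  (h : R -> R) (p : 'I_n -> 'I_n -> 'rV[R]_n -> R)
  (theta h0 h1 : R) :
  (3 <= n)%N ->
  open O -> bounded_set O -> C2_boundary O ->
  (* r in C^1(R x Obar, R^n) *)
  C1_joint (closure O) r ->
  (* for each t, r(t,.) : Obar -> r(t,Obar) is a C^2 diffeomorphism with inverse rinv(t,.) *)
  (forall t, Ck_on 2 (closure O) (r t)) ->
  (forall t, Ck_on 2 (r t @` closure O) (rinv t)) ->
  (forall t y, closure O y -> rinv t (r t y) = y) ->
  (forall t x, (r t @` closure O) x -> r t (rinv t x) = x) ->
  (* (H1) *)
  (forall t x, (r t @` closure O) x ->
     derivable (fun s => rinv s x) t 1 /\
     {for t, continuous (fun u => derive (fun s => rinv s x) u 1)}) ->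
  continuous h ->
  (forall i k, Ck 1 setT (p i k)) ->
  (forall t y (i k : 'I_n), closure O y ->
     partial (fun x => vcoord (rinv t x) k) i (r t y) = h t * p i k y) ->
  0 < theta -> theta <= 1 ->
  (exists L : R, forall s t, `|h s - h t| <= L * (`|s - t| `^ theta)) ->
  0 < h0 -> (forall t, h0 <= h t /\ h t <= h1) ->
  (* uniform strong ellipticity on [tau, T] *)
  forall tau T : R, tau < T ->
    exists C : R, 0 < C /\
      forall t y (z : 'rV[R]_n), tau <= t <= T -> closure O y ->
        \sum_(j < n) \sum_(k < n) acoef r rinv j k t y * vcoord z j * vcoord z k
          >= C * \sum_(j < n) vcoord z j ^+ 2.
Proof.
move=> n3 oO bO _ _ Hr Hri Hinv _ _ _ Hp Hpart _ _ _ h00 hb tau T _.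
have n0 : (0 < n)%N by apply: leq_trans n3.
have [U [oU [DU CkU]]] := Hr 0.
have [V [oV [DV CkV]]] := Hri 0.
have dr0 y l : U y -> derivable (r 0) y (evec R l) := fun Uy => (CkU.2 l).1 y Uy.
have cdr0 l y : U y -> {for y, continuous (partial (r 0) l)} := ((CkU.2 l).2).1 y.
have dri x m : V x -> derivable (rinv 0) x (evec R m) := fun Vx => (CkV.2 m).1 x Vx.
have cdri m x : V x -> {for x, continuous (partial (rinv 0) m)} := ((CkV.2 m).2).1 x.
have : forall l : 'I_n, exists Kl : R, 0 < Kl /\
    forall y, closure O y -> `|partial (r 0) l y| <= Kl.
  by move=> l; exact: (@bound_on_closure _ _ O U _ _ bO DU (cdr0 l)).
case/fin_all_exists => Kf HKf.
set K := \sum_l Kf l + 1.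
have K0 : 0 < K by rewrite /K ltr_wpDl // sumr_ge0 // => l _; apply: ltW (HKf l).1.
have HK l y : closure O y -> `|partial (r 0) l y| <= K.
  move=> Cy; apply: le_trans ((HKf l).2 y Cy) _.
  rewrite /K; apply: le_trans (_ : \sum_l Kf l <= _).
    by apply: (@term_le_sum _ _ Kf) => i; apply: ltW (HKf i).1.
  by rewrite lerDl.
have h0pos : 0 < h 0 by apply: lt_le_trans h00 (hb 0).1.
have h01 : h 0 <= h1 := (hb 0).2.
set A := n%:R * K * h1.
set B := n%:R * (A ^+ 2 * n%:R).
have HO : forall y (z : 'rV[R]_n), O y ->
    \sum_j (z ord0 j) ^+ 2 <= B * \sum_m (\sum_k p m k y * z ord0 k) ^+ 2.
  move=> y z Oy.
  have Cy : closure O y := subset_closure Oy.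
  have Uy := DU y Cy.
  have Vx : V (r 0 y) by apply: DV; exists y.
  set S := \sum_m `|\sum_k p m k y * z ord0 k|.
  have S0 : 0 <= S by apply: sumr_ge0.
  have Hl l : `|z ord0 l| <= A * S.
    have := @key R n O V (r 0) (rinv 0) y z K l oO Oy
      (fun y' Oy' => Hinv 0 y' (subset_closure Oy')) oV Vx
      (fun x m Vx => dri x m Vx) (fun m => cdri m _ Vx) (dr0 y l Uy) (HK l y Cy).
    have E m k : (partial (rinv 0) m (r 0 y)) ord0 k = h 0 * p m k y.
      rewrite -Hpart // /partial derive_mx ?mxE //; exact: dri.
    have -> : \sum_m `|\sum_k z ord0 k * (partial (rinv 0) m (r 0 y)) ord0 k| = h 0 * S.
      rewrite /S mulr_sumr; apply: eq_bigr => m _.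
      rewrite -[h 0]gtr0_norm // -normrM mulr_sumr; congr `|_|.
      by apply: eq_bigr => k _; rewrite E; ring.
    move=> H; apply: le_trans H _.
    have := mulr_ge0 (mulr_ge0 (ler0n _ n) (ltW K0)) S0.
    rewrite /A; nra.
  have h1pos : 0 < h1 := lt_le_trans h0pos h01.
  have A0 : 0 <= A by rewrite /A; apply: mulr_ge0; [apply: mulr_ge0 => //; apply: ltW|apply: ltW].
  have Hl2 l : z ord0 l ^+ 2 <= A ^+ 2 * (n%:R * \sum_m (\sum_k p m k y * z ord0 k) ^+ 2).
    have H1 : z ord0 l ^+ 2 <= A ^+ 2 * S ^+ 2.
      rewrite -(real_normK (num_real (z ord0 l))) -exprMn.
      have := Hl l; have := normr_ge0 (z ord0 l); nra.
    apply: le_trans H1 _.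
    apply: ler_wpM2l; first by apply: sqr_ge0.
    apply: le_trans (@sumsq_le R n (fun m => `|\sum_k p m k y * z ord0 k|)) _.
    apply: ler_wpM2l => //; apply: ler_sum => m _.
    by rewrite real_normK // num_real.
  have Hs : \sum_j z ord0 j ^+ 2 <= \sum_(j < n) A ^+ 2 * (n%:R * \sum_m (\sum_k p m k y * z ord0 k) ^+ 2).
    by apply: ler_sum => j _; apply: Hl2.
  apply: le_trans Hs _.
  rewrite sumr_const card_ord -[_ *+ n]mulr_natl /B le_eqVlt; apply/orP; left; apply/eqP; ring.
have HC : forall y (z : 'rV[R]_n), closure O y ->
    \sum_j (z ord0 j) ^+ 2 <= B * \sum_m (\sum_k p m k y * z ord0 k) ^+ 2.
  move=> y z Cy.
  set g := fun y => B * \sum_m (\sum_k p m k y * z ord0 k) ^+ 2.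
  have gc : continuous g.
    move=> y0; apply: (@continuousM _ _ (cst B)); first exact: cst_continuous.
    apply: cont_sum => m.
    have -> : (fun y => (\sum_k p m k y * z ord0 k) ^+ 2)
        = (fun y => \sum_k p m k y * z ord0 k) \* (fun y => \sum_k p m k y * z ord0 k).
      by apply: funext => y'; rewrite /= expr2.
    have cs : {for y0, continuous (fun y => \sum_k p m k y * z ord0 k)}.
      apply: cont_sum => k.
      apply: (@continuousM _ _ (p m k) (cst (z ord0 k))).
        exact: ((Hp m k).1 y0 I).
      exact: cst_continuous.
    exact: continuousM.
  have cl : closed (g @^-1` [set u | \sum_j (z ord0 j) ^+ 2 <= u]).
    apply: (proj1 (continuous_closedP g) gc). exact: closed_ge.
  have sub : O `<=` g @^-1` [set u | \sum_j (z ord0 j) ^+ 2 <= u].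
    by move=> y' Oy'; apply: HO.
  have e := (closure_id _).1 cl.
  by have := closureS sub Cy; rewrite -e.
have h1pos : 0 < h1 := lt_le_trans h0pos h01.
have B0 : 0 < B.
  have A0 : 0 < A by rewrite /A !mulr_gt0 // ltr0n.
  by rewrite /B !mulr_gt0 // ?ltr0n // exprn_gt0.
exists (h0 ^+ 2 / B); split; first by rewrite divr_gt0 // exprn_gt0.
move=> t y z _ Cy.
set Q := \sum_m (\sum_k p m k y * z ord0 k) ^+ 2.
have E : \sum_(j < n) \sum_(k < n) acoef r rinv j k t y * vcoord z j * vcoord z k
    = h t ^+ 2 * Q.
  have Ea j k : acoef r rinv j k t y = h t ^+ 2 * \sum_i p i j y * p i k y.
    rewrite /acoef mulr_sumr; apply: eq_bigr => i _; rewrite !Hpart //; ring.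
  have sq (a : 'I_n -> R) : (\sum_j a j) ^+ 2 = \sum_j \sum_k a j * a k.
    rewrite expr2 mulr_suml; apply: eq_bigr => j _; by rewrite mulr_sumr.
  rewrite /Q.
  under [in RHS]eq_bigr do rewrite sq.
  rewrite mulr_sumr.
  under [in RHS]eq_bigr do rewrite mulr_sumr.
  under [in RHS]eq_bigr do under eq_bigr do rewrite mulr_sumr.
  have L : \sum_(j < n) \sum_(k < n) acoef r rinv j k t y * vcoord z j * vcoord z k
     = \sum_(j < n) \sum_(k < n) \sum_(i < n) h t ^+ 2 * (p i j y * p i k y) * z ord0 j * z ord0 k.
    apply: eq_bigr => j _; apply: eq_bigr => k _.
    by rewrite Ea mulr_sumr !mulr_suml.
  rewrite L.
  rewrite [LHS]exchange_big /=.
  under [LHS]eq_bigr do rewrite exchange_big.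
  rewrite [LHS]exchange_big /=.
  apply: eq_bigr => i _; rewrite [LHS]exchange_big /=.
  by apply: eq_bigr => j _; apply: eq_bigr => k _; ring.
rewrite E.
have HQ := HC y z Cy.
have Q0 : 0 <= Q by apply: sumr_ge0 => m _; apply: sqr_ge0.
have ht : h0 <= h t := (hb t).1.
have ht2 : h0 ^+ 2 <= h t ^+ 2 by rewrite ler_pXn2r // ?nnegrE ltW // (lt_le_trans h00 ht).
rewrite /vcoord.
apply: (@le_trans _ _ (h0 ^+ 2 * Q)); last by apply: ler_wpM2r.
rewrite -mulrA; apply: ler_wpM2l; first by rewrite exprn_ge0 // ltW.
by rewrite ler_pdivrMl.
Qed.
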